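(* Let $\xi_k=I_k-(\theta(M_k)-\theta(M_{k-1}))$ for $k\ge1$. Then for every $k\ge1$, almost surely, $$E[\xi_k^2\mid\mathcal{F}_{k-1}]=\sum_{i>M_{k-1}}s_i\,(y_{i+\delta}+y_{i+\delta-1}-y_{i-1})\quad\text{if }\delta<0,$$ and $$E[\xi_k^2\mid\mathcal{F}_{k-1}]=y_{M_{k-1}+\delta}\Big(1-2\sum_{i=1}^{\delta}s_{M_{k-1}+i}\Big)+2\sum_{i>M_{k-1}}s_i\Big(y_{i+\delta}+\frac{p_{i+\delta}}{2}\Big)-2y_{M_{k-1}+2\delta}\quad\text{if }\delta>0.$$
   Context: Let $\{X_n,n\ge1\}$ be independent, identically distributed random variables with values in $\mathbb{Z}_+=\{0,1,2,\dots\}$ such that $p_k=P[X_1=k]>0$ for every $k\in\mathbb{Z}_+$ (set $p_m=0$ for integers $m\le -1$). For $k\in\mathbb{Z}_+$ let $y_k=\sum_{i>k}p_i$, and set $y_m=1$ for integers $m\le-1$. Fix an integer $\delta$ and define $s_k=p_{k+\delta}/y_{k-1}$ and $\theta(k)=\sum_{i=0}^k s_i$ for $k\in\mathbb{Z}_+$. Let $M_0=0$ and $M_n=\max\{X_1,\dots,X_n\}$ for $n\ge1$. Let $I_k=\mathbf{1}_{\{X_k>M_{k-1}+\delta\}}$. Let $\mathcal{F}_0=\{\emptyset,\Omega\}$ and $\mathcal{F}_n=\sigma(X_1,\dots,X_n)$ for $n\ge1$. *)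

(* Defs.v *)
From HB Require Import structures.
From mathcomp Require Import all_boot all_order all_algebra.
From mathcomp Require Import all_classical all_reals all_analysis.
From mathcomp Require Import measurable_realfun.
Set Implicit Arguments. Unset Strict Implicit. Unset Printing Implicit Defensive.
Import Order.TTheory GRing.Theory Num.Theory.
Local Open Scope classical_set_scope.
Local Open Scope ring_scope.

Section defs.
Context {R : realType}.

Definition pz (p : nat -> R) (m : int) : R :=
  match m with Posz n => p n | Negz _ => 0 end.

Definition yz (p : nat -> R) (m : int) : R :=
  match m with
  | Posz k => \big[+%R/0%R]_(k.+1 <= i <oo) p i
  | Negz _ => 1
  end.

Definition s_ (p : nat -> R) (delta : int) (k : nat) : R :=
  pz p (k%:Z + delta) / yz p (k%:Z - 1).

Definition theta (p : nat -> R) (delta : int) (k : nat) : R :=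
  \sum_(0 <= i < k.+1) s_ p delta i.

Definition Mx {T : Type} (X : nat -> T -> nat) (n : nat) (w : T) : nat :=
  \max_(1 <= i < n.+1) X i w.

Definition Ind {T : Type} (X : nat -> T -> nat) (delta : int) (k : nat) (w : T) : R :=
  if (Mx X k.-1 w)%:Z + delta < (X k w)%:Z then 1 else 0.

Definition xi {T : Type} (X : nat -> T -> nat) (p : nat -> R) (delta : int)
  (k : nat) (w : T) : R :=
  Ind X delta k w - (theta p delta (Mx X k w) - theta p delta (Mx X k.-1 w)).

(* F_n = sigma(X_1, ..., X_n) (Z_+ carries the discrete sigma-algebra);
   for n = 0 this is the trivial sigma-algebra {emptyset, Omega}. *)
Definition filtr {T : Type} (X : nat -> T -> nat) (n : nat) : set (set T) :=
  <<s [set A | exists i (B : set nat), (1 <= i <= n)%N /\ A = X i @^-1` B] >>.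

End defs.

Section condexp.
Context {R : realType} {d : measure_display} {T : measurableType d}.
Local Open Scope ereal_scope.

Definition is_cond_exp (P : probability T R) (G : set (set T)) (Y Z : T -> \bar R) : Prop :=
  (forall B : set (\bar R), measurable B -> G (Z @^-1` B)) /\
  (forall A, G A -> \int[P]_(w in A) Y w = \int[P]_(w in A) Z w).

Definition mutually_independent (P : probability T R) (X : nat -> T -> nat) : Prop :=
  forall (n : nat) (B : nat -> set nat),
    P (\big[setI/setT]_(1 <= i < n.+1) (X i @^-1` B i)) =
    \prod_(1 <= i < n.+1) P (X i @^-1` B i).

End condexp.

(* Main.v *)
Require Import Defs.
From HB Require Import structures.
From mathcomp Require Import all_boot all_order all_algebra.
From mathcomp Require Import all_classical all_reals all_analysis.
From mathcomp Require Import measurable_realfun.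
From mathcomp Require Import zify ring lra.
Import Order.TTheory GRing.Theory Num.Theory.
Local Open Scope classical_set_scope.
Local Open Scope ring_scope.
Import numFieldNormedType.Exports.
Section series_tools.
Context {R : realType}.
Local Open Scope ereal_scope.

Lemma kron (a : nat) (x : \bar R) : 0 <= x ->
  \sum_(i <oo) (if i == a then x else 0) = x.
Proof.
move=> x0.
rewrite (@nneseriesD1 _ _ a xpredT) ?eqxx //; last by move=> i _; case: ifP.
by rewrite eseries0 ?adde0// => i _ /andP[_ /negbTE ->].
Qed.

Lemma fin2ser (N : nat) (f : nat -> \bar R) : (forall i, 0 <= f i) ->
  \sum_(i <oo) (if (i < N)%N then f i else 0) = \sum_(0 <= i < N) f i.
Proof.
move=> f0.
rewrite (nneseries_split 0 N); last by move=> i _; case: ifP.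
rewrite add0n eseries0 ?adde0; last by move=> i Ni _; rewrite ltnNge Ni.
by apply: eq_big_nat => i /andP[_ ->].
Qed.

Lemma tailser (N : nat) (f : nat -> \bar R) :
  \sum_(N <= i <oo) f i = \sum_(i <oo) (if (N <= i)%N then f i else 0).
Proof. by rewrite ereal_series eseries_mkcond. Qed.

End series_tools.
Section yz_facts.
Context {R : realType} (p : nat -> R) (hpos : forall k, 0 < p k)
  (hsum : (\sum_(j <oo) (p j)%:E = 1)%E).

Lemma TR (t : int) : (yz p t)%:E = (\sum_(j <oo) (if t < j%:Z then p j else 0)%:E)%E.
Proof.
case: t => [t|t] /=.
- pose q := fun i => if (t < i)%N then p i else 0.
  have q0 i : 0 <= q i by rewrite /q; case: ifP => // _; exact/ltW.
  have Eu : (fun n => \sum_(t.+1 <= i < n) p i) = series q.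
    apply/funext => n; rewrite /series /= (big_nat_widenl _ 0)//.
    by rewrite big_mkcond /=.
  have cq : cvgn (series q).
    apply: nnseries_is_cvg => //; apply: (@le_lt_trans _ _ 1%E); last by rewrite ltry.
    rewrite -hsum.
    apply: lee_nneseries; first by move=> i _ _; rewrite lee_fin.
    by move=> i _; rewrite lee_fin /q; case: ifP => // _; exact/ltW.
  have cu : cvgn (fun n => \sum_(t.+1 <= i < n) p i) by move: cq; rewrite -Eu.
  rewrite -EFin_lim//; apply: congr_lim; apply/funext => n /=.
  rewrite sumEFin; congr (_%:E); rewrite (big_nat_widenl _ 0)// big_mkcond /=.
  by apply: eq_bigr => i _; rewrite ltz_nat.
- rewrite -hsum; apply: congr_lim; apply/funext => n /=.
  by apply: eq_bigr.
Qed.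


Lemma pzE (t : int) : (pz p t)%:E = (\sum_(j <oo) (if j%:Z == t then p j else 0)%:E)%E.
Proof.
case: t => [t|t] /=.
- transitivity (\sum_(j <oo) (if j == t then (p t)%:E else 0))%E.
    by rewrite kron // lee_fin ltW.
  apply: eq_eseriesr => j _; rewrite eqz_nat; by case: eqP => [->|].
- rewrite eseries0 // => j _ _; case: ifP => //; rewrite NegzE; lia.
Qed.

Lemma Y2 (t : int) : yz p (t - 1) = yz p t + pz p t.
Proof.
apply: EFin_inj; rewrite EFinD !TR pzE -nneseriesD; last 2 first.
- by move=> j _ _; case: ifP => _ //; rewrite lee_fin ltW.
- by move=> j _ _; case: ifP => _ //; rewrite lee_fin ltW.
apply: eq_eseriesr => j _; rewrite -EFinD; congr (_%:E).
have [h1|h1] := boolP (t < j%:Z); have [h2|h2] := boolP (j%:Z == t);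
  have [h3|h3] := boolP (t - 1 < j%:Z); rewrite ?addr0 ?add0r //; try lia.
Qed.

Lemma yz_ge0 t : 0 <= yz p t.
Proof.
rewrite -lee_fin TR; apply: nneseries_ge0 => j _ _.
by case: ifP => _ //; rewrite lee_fin ltW.
Qed.

Lemma yz_gt0 t : 0 < yz p t.
Proof.
case: t => [t|t]; last exact: ltr01.
have := Y2 (t.+1)%:Z; rewrite (_ : (t.+1)%:Z - 1 = t%:Z); last by lia.
move=> ->; have := yz_ge0 (Posz t.+1); have : 0 < pz p (Posz t.+1) by exact: hpos.
lra.
Qed.

Lemma yz_mono t t' : t <= t' -> yz p t' <= yz p t.
Proof.
move=> tt'; rewrite -lee_fin !TR; apply: lee_nneseries.
- by move=> j _ _; case: ifP => _ //; rewrite lee_fin ltW.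
- move=> j _; rewrite lee_fin; have [h1|h1] := boolP (t' < j%:Z);
  have [h2|h2] := boolP (t < j%:Z) => //; try lia.
  exact: ltW.
Qed.

Lemma sY delta i : s_ p delta i * yz p (i%:Z - 1) = pz p (i%:Z + delta).
Proof. by rewrite /s_ divfK // gt_eqF // yz_gt0. Qed.

Lemma reindex (m : nat) (c : int) : (yz p (m%:Z + c))%:E =
  (\sum_(i <oo) (if (m < i)%N then pz p (i%:Z + c) else 0)%:E)%E.
Proof.
transitivity (\sum_(i <oo) \sum_(l <oo)
   (if (m < i)%N && (l%:Z == i%:Z + c) then p l else 0)%:E)%E; last first.
  apply: eq_eseriesr => i _; case: ifP => mi /=; first by rewrite pzE.
  by rewrite eseries0.
rewrite nneseries_interchange; last first.
  by move=> i j; case: ifP => _ //; rewrite lee_fin ltW.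
rewrite TR; apply: eq_eseriesr => l _; symmetry.
have [h|h] := boolP (0 <= l%:Z - c).
- pose i0 := `|l%:Z - c|%N.
  have Hi0 : i0%:Z = l%:Z - c by rewrite /i0; lia.
  transitivity (\sum_(i <oo) (if i == i0 then (if m%:Z + c < l%:Z then p l else 0)%:E
                             else 0))%E; last first.
    by rewrite kron // lee_fin; case: ifP => _ //; exact: ltW.
  apply: eq_eseriesr => i _; have [->|ne] := eqVneq i i0.
  + have [h1|h1] := boolP (m%:Z + c < l%:Z); have [h2|h2] := boolP (m < i0)%N;
    have [h3|h3] := boolP (l%:Z == i0%:Z + c) => //=; lia.
  + have [h2|h2] := boolP (m < i)%N; have [h3|h3] := boolP (l%:Z == i%:Z + c) => //=; lia.
- rewrite eseries0; last first.
    move=> i _ _; have [h3|h3] := boolP (l%:Z == i%:Z + c); last by rewrite andbF.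
    lia.
  have [h1|h1] := boolP (m%:Z + c < l%:Z) => //; lia.
Qed.

End yz_facts.
Section per_m.
Context {R : realType} (p : nat -> R) (hpos : forall k, 0 < p k)
  (hsum : (\sum_(j <oo) (p j)%:E = 1)%E) (delta : int) (m : nat).

Let s i := s_ p delta i.
Let TR' := TR p hpos hsum.
Let reindex' := reindex p hpos hsum.
Let sY' := sY p hpos hsum delta.
Let yz_ge0' := yz_ge0 p hpos hsum.
Let yz_gt0' := yz_gt0 p hpos hsum.
Let Y2' := Y2 p hpos hsum.
Let yz_mono' := yz_mono p hpos hsum.

Lemma pz_ge0 t : 0 <= pz p t.
Proof. by case: t => [t|t] //=; exact/ltW. Qed.

Lemma s_ge0 i : 0 <= s_ p delta i.
Proof. by rewrite /s_ divr_ge0 ?pz_ge0 // ltW // yz_gt0. Qed.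

Definition Dl j := \sum_(0 <= i < j.+1) (if (m < i)%N then s_ p delta i else 0).
Definition Dlt j := \sum_(0 <= i < j) (if (m < i)%N then s_ p delta i else 0).
Definition Il (j : nat) : R := if m%:Z + delta < j%:Z then 1 else 0.

Lemma Dl_rec j : Dl j.+1 = Dl j + (if (m < j.+1)%N then s_ p delta j.+1 else 0).
Proof. by rewrite /Dl big_nat_recr. Qed.

Lemma Dl_Dlt j : Dl j = Dlt j + (if (m < j)%N then s_ p delta j else 0).
Proof. by rewrite /Dl /Dlt big_nat_recr. Qed.

Lemma Dl0 : Dl 0 = 0.
Proof. by rewrite /Dl big_nat1. Qed.

Lemma Dlt_ge0 j : 0 <= Dlt j.
Proof. by apply: sumr_ge0 => i _; case: ifP => _ //; exact: s_ge0. Qed.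

Lemma Dl_ge0 j : 0 <= Dl j.
Proof. by apply: sumr_ge0 => i _; case: ifP => _ //; exact: s_ge0. Qed.

Lemma thetaD j : theta p delta (maxn m j) - theta p delta m = Dl j.
Proof.
case: (leqP j m) => h.
- rewrite subrr /Dl big_nat_cond big1 // => i /andP[/andP[_ hi] _].
  by case: ifP => // mi; exfalso; lia.
- rewrite /theta /Dl.
  rewrite [X in X - _](@big_cat_nat _ _ _ m.+1 0 j.+1) //=; last by lia.
  rewrite addrC addrK.
  rewrite (@big_cat_nat _ _ _ m.+1 0 j.+1) //=; last by lia.
  rewrite [X in _ = X + _]big1_seq ?add0r; last first.
    by move=> i; rewrite mem_index_iota => /andP[_ hi]; case: ifP => // mi; exfalso; lia.
  by apply: eq_big_nat => i /andP[hi _]; rewrite hi.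
Qed.

Lemma Dl_ser j : (Dl j)%:E =
  (\sum_(i <oo) (if (i <= j)%N then (if (m < i)%N then s_ p delta i else 0) else 0)%:E)%E.
Proof.
rewrite /Dl -sumEFin -(fin2ser j.+1); last first.
  by move=> i; rewrite lee_fin; case: ifP => _ //; exact: s_ge0.
by apply: eq_eseriesr => i _; rewrite ltnS; case: ifP.
Qed.

Lemma Dlt_ser j : (Dlt j)%:E =
  (\sum_(i <oo) (if (i < j)%N then (if (m < i)%N then s_ p delta i else 0) else 0)%:E)%E.
Proof.
rewrite /Dlt -sumEFin -(fin2ser j); last first.
  by move=> i; rewrite lee_fin; case: ifP => _ //; exact: s_ge0.
by apply: eq_eseriesr => i _; case: ifP.
Qed.

Definition cc i := if (m < i)%N then s_ p delta i * (2 * Dl i - s_ p delta i) else 0.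

Lemma Tele j : Dl j ^+ 2 = \sum_(0 <= i < j.+1) cc i.
Proof.
elim: j => [|j IH]; first by rewrite Dl0 big_nat1 /cc expr0n.
rewrite big_nat_recr //= -IH /cc Dl_rec; case: ifP => _; last by rewrite !addr0.
ring.
Qed.

Lemma cc_ge0 i : 0 <= cc i.
Proof.
rewrite /cc; case: ifP => // mi; apply: mulr_ge0; first exact: s_ge0.
case: i mi => [|i] mi; first by exfalso; lia.
rewrite Dl_rec mi; have := Dl_ge0 i; have := s_ge0 i.+1; lra.
Qed.


Definition ltI (a b : int) : bool := a < b.
Definition Tm (i : nat) : int :=
  if ltI (i%:Z - 1) (m%:Z + delta) then m%:Z + delta else i%:Z - 1.

Lemma Il_ge0 j : 0 <= Il j.
Proof. by rewrite /Il; case: ifP => _ //; exact: ler01. Qed.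

Lemma S1 : (\sum_(j <oo) (p j * Il j)%:E)%E = (yz p (m%:Z + delta))%:E.
Proof.
rewrite (TR' (m%:Z + delta)); apply: eq_eseriesr => j _; rewrite /Il.
by case: ifP => _; rewrite ?mulr1 ?mulr0.
Qed.

Lemma S2gen : (\sum_(j <oo) (p j * Il j * Dl j)%:E)%E =
  (\sum_(i <oo) (if (m < i)%N then s_ p delta i * yz p (Tm i) else 0)%:E)%E.
Proof.
transitivity (\sum_(j <oo) \sum_(i <oo)
   (if (i <= j)%N then (if (m < i)%N then s_ p delta i else 0) * (p j * Il j) else 0)%:E)%E.
  apply: eq_eseriesr => j _.
  rewrite EFinM Dl_ser -nneseriesZl; last first.
    by move=> i _; rewrite lee_fin; case: ifP => _ //; case: ifP => _ //; exact: s_ge0.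
  apply: eq_eseriesr => i _; rewrite -EFinM; case: ifP => _; first by rewrite mulrC.
  by rewrite mulr0.
rewrite nneseries_interchange; last first.
  move=> j i; rewrite lee_fin; case: ifP => _ //; apply: mulr_ge0.
    by case: ifP => _ //; exact: s_ge0.
  by apply: mulr_ge0; [exact/ltW | exact: Il_ge0].
apply: eq_eseriesr => i _; case: ifP => mi; last first.
  by rewrite eseries0 // => j _ _; case: ifP => _ //; rewrite mul0r.
transitivity ((s_ p delta i)%:E * \sum_(j <oo) (if (i <= j)%N then p j * Il j else 0)%:E)%E.
  rewrite -nneseriesZl; last first.
    by move=> j _; rewrite lee_fin; case: ifP => _ //; apply: mulr_ge0; [exact/ltW | exact: Il_ge0].
  by apply: eq_eseriesr => j _; rewrite -EFinM; case: ifP => _; rewrite ?mulr0.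
rewrite [RHS]EFinM TR'; congr (_ * _)%E; apply: eq_eseriesr => j _.
rewrite /Il /Tm /ltI.
have [h3|h3] := boolP (i%:Z - 1 < m%:Z + delta);
have [h1|h1] := boolP (i <= j)%N; have [h2|h2] := boolP (m%:Z + delta < j%:Z);
have [h4|h4] := boolP (i%:Z - 1 < j%:Z); rewrite ?mulr1 ?mulr0 //; exfalso; lia.
Qed.

Lemma S2neg : delta < 0 ->
  (\sum_(j <oo) (p j * Il j * Dl j)%:E)%E = (yz p (m%:Z + delta))%:E.
Proof.
move=> hneg; rewrite S2gen reindex'; apply: eq_eseriesr => i _.
case: ifP => mi //; rewrite /Tm /ltI ifN ?sY' //. lia.
Qed.

Lemma S2pos : 0 < delta ->
  (\sum_(j <oo) (p j * Il j * Dl j)%:E)%E =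
  (yz p (m%:Z + delta) * \sum_(1 <= i < `|delta|%N.+1) s_ p delta (m + i)
    + yz p (m%:Z + 2 * delta))%:E.
Proof.
move=> hp; set dn := `|delta|%N.
have hd : delta = dn%:Z by rewrite /dn; lia.
rewrite S2gen.
transitivity (\sum_(i <oo) ((if (m < i)%N && (i <= m + dn)%N
      then s_ p delta i * yz p (m%:Z + delta) else 0)%:E
    + (if (m + dn < i)%N then pz p (i%:Z + delta) else 0)%:E))%E.
  apply: eq_eseriesr => i _; rewrite -EFinD; congr (_%:E); rewrite /Tm /ltI.
  have [h2|h2] := boolP (i%:Z - 1 < m%:Z + delta);
  have [h3|h3] := boolP (m + dn < i)%N; have [h1|h1] := boolP (i <= m + dn)%N;
  have [h0|h0] := boolP (m < i)%N; rewrite /= ?addr0 ?add0r ?sY' //. all: try (exfalso; lia).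
rewrite nneseriesD; last 2 first.
- move=> i _ _; rewrite lee_fin; case: ifP => _ //; apply: mulr_ge0; first exact: s_ge0.
  exact: yz_ge0'.
- by move=> i _ _; rewrite lee_fin; case: ifP => _ //; exact: pz_ge0.
rewrite EFinD; congr (_ + _)%E.
- transitivity (\sum_(i <oo) (if (i < (m + dn).+1)%N then
      (if (m < i)%N then s_ p delta i * yz p (m%:Z + delta) else 0)%:E else 0))%E.
    apply: eq_eseriesr => i _; rewrite ltnS.
    by have [h1|h1] := boolP (i <= m + dn)%N; have [h0|h0] := boolP (m < i)%N.
  rewrite fin2ser; last first.
    move=> i; rewrite lee_fin; case: ifP => _ //; apply: mulr_ge0; first exact: s_ge0.
    exact: yz_ge0'.
  rewrite sumEFin; congr (_%:E).
  rewrite (@big_cat_nat _ _ _ m.+1 0 (m + dn).+1) //=; last by lia.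
  rewrite [X in X + _]big1_seq ?add0r; last first.
    by move=> i; rewrite mem_index_iota => /andP[_ hi]; case: ifP => // mi; exfalso; lia.
  rewrite mulr_sumr -(add1n m) big_addn.
  rewrite (_ : (m + dn).+1 - m = dn.+1)%N; last by lia.
  apply: eq_big_nat => i /andP[hi _]; rewrite ifT; last by lia.
  by rewrite addnC mulrC.
- have -> : m%:Z + 2 * delta = (m + dn)%N%:Z + delta by lia.
  by rewrite reindex'.
Qed.

Lemma S3aux :
  (\sum_(i <oo) (if (m < i)%N then pz p (i%:Z + delta) * Dlt i else 0)%:E)%E =
  (\sum_(l <oo) (if (m < l)%N then s_ p delta l * yz p (l%:Z + delta) else 0)%:E)%E.
Proof.
pose a i := if (m < i)%N then pz p (i%:Z + delta) else 0.
have a0 i : 0 <= a i by rewrite /a; case: ifP => _ //; exact: pz_ge0.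
transitivity (\sum_(i <oo) \sum_(l <oo)
   (if (l < i)%N then (if (m < l)%N then s_ p delta l else 0) * a i else 0)%:E)%E.
  apply: eq_eseriesr => i _.
  transitivity ((a i)%:E * (Dlt i)%:E)%E.
    by rewrite -EFinM /a; case: ifP => _; rewrite ?mul0r.
  rewrite Dlt_ser -nneseriesZl; last first.
    by move=> l _; rewrite lee_fin; case: ifP => _ //; case: ifP => _ //; exact: s_ge0.
  by apply: eq_eseriesr => l _; rewrite -EFinM; case: ifP => _; rewrite ?mulr0 // mulrC.
rewrite nneseries_interchange; last first.
  move=> i l; rewrite lee_fin; case: ifP => _ //; apply: mulr_ge0 => //.
  by case: ifP => _ //; exact: s_ge0.
apply: eq_eseriesr => l _; case: ifP => ml; last first.
  by rewrite eseries0 // => i _ _; case: ifP => _ //; rewrite mul0r.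
rewrite [RHS]EFinM reindex' -nneseriesZl; last first.
  by move=> i _; rewrite lee_fin; case: ifP => _ //; exact: pz_ge0.
apply: eq_eseriesr => i _; rewrite -EFinM /a.
have [h1|h1] := boolP (l < i)%N; have [h2|h2] := boolP (m < i)%N; rewrite ?mulr0 //.
exfalso; lia.
Qed.

Lemma S3 : (\sum_(j <oo) (p j * Dl j ^+ 2)%:E)%E =
  (\sum_(i <oo) (if (m < i)%N then s_ p delta i *
      (pz p (i%:Z + delta) + 2 * yz p (i%:Z + delta)) else 0)%:E)%E.
Proof.
transitivity (\sum_(i <oo) (cc i * yz p (i%:Z - 1))%:E)%E.
  transitivity (\sum_(j <oo) \sum_(i <oo) (if (i <= j)%N then cc i * p j else 0)%:E)%E.
    apply: eq_eseriesr => j _; rewrite Tele EFinM -sumEFin -fin2ser; last first.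
      by move=> i; rewrite lee_fin; exact: cc_ge0.
    rewrite -nneseriesZl; last first.
      by move=> i _; case: ifP => _ //; rewrite lee_fin; exact: cc_ge0.
    apply: eq_eseriesr => i _; rewrite ltnS; case: ifP => _; last by rewrite mule0.
    by rewrite -EFinM mulrC.
  rewrite nneseries_interchange; last first.
    by move=> j i; rewrite lee_fin; case: ifP => _ //; apply: mulr_ge0;
      [exact: cc_ge0 | exact/ltW].
  apply: eq_eseriesr => i _.
  transitivity ((cc i)%:E * \sum_(j <oo) (if i%:Z - 1 < j%:Z then p j else 0)%:E)%E;
    last by rewrite -TR' EFinM.
  rewrite -nneseriesZl; last first.
    by move=> j _; rewrite lee_fin; case: ifP => _ //; exact/ltW.
  apply: eq_eseriesr => j _; rewrite -EFinM.
  have [h|h] := boolP (i <= j)%N; have [h'|h'] := boolP (i%:Z - 1 < j%:Z);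
    rewrite ?mulr0 //; exfalso; lia.
transitivity (\sum_(i <oo) ((if (m < i)%N then pz p (i%:Z + delta) * s_ p delta i else 0)%:E
   + 2%:E * (if (m < i)%N then pz p (i%:Z + delta) * Dlt i else 0)%:E))%E.
  apply: eq_eseriesr => i _; rewrite -EFinM -EFinD /cc; case: ifP => mi; last first.
    by rewrite mul0r mulr0 addr0.
  rewrite Dl_Dlt mi mulrAC sY'; congr (_%:E); ring.
rewrite nneseriesD; last 2 first.
- by move=> i _ _; rewrite lee_fin; case: ifP => _ //; apply: mulr_ge0;
    [exact: pz_ge0 | exact: s_ge0].
- move=> i _ _; apply: mule_ge0 => //; rewrite lee_fin; case: ifP => _ //.
  by apply: mulr_ge0; [exact: pz_ge0 | exact: Dlt_ge0].
rewrite nneseriesZl; last first.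
  move=> i _; rewrite lee_fin; case: ifP => _ //.
  by apply: mulr_ge0; [exact: pz_ge0 | exact: Dlt_ge0].
rewrite S3aux -nneseriesZl; last first.
  move=> i _; rewrite lee_fin; case: ifP => _ //.
  by apply: mulr_ge0; [exact: s_ge0 | exact: yz_ge0'].
rewrite -nneseriesD; last 2 first.
- by move=> i _ _; rewrite lee_fin; case: ifP => _ //; apply: mulr_ge0;
    [exact: pz_ge0 | exact: s_ge0].
- move=> i _ _; apply: mule_ge0 => //; rewrite lee_fin; case: ifP => _ //.
  by apply: mulr_ge0; [exact: s_ge0 | exact: yz_ge0'].
apply: eq_eseriesr => i _; rewrite -EFinM -EFinD; case: ifP => _; last first.
  by rewrite mulr0 addr0.
congr (_%:E); ring.
Qed.

Definition Fl j := (Il j - Dl j) ^+ 2.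

Lemma key : (\sum_(j <oo) (p j * Fl j)%:E
    + 2%:E * \sum_(j <oo) (p j * Il j * Dl j)%:E =
  \sum_(j <oo) (p j * Il j)%:E + \sum_(j <oo) (p j * Dl j ^+ 2)%:E)%E.
Proof.
have pI j : 0 <= p j * Il j by apply: mulr_ge0; [exact/ltW | exact: Il_ge0].
rewrite -nneseriesZl; last by move=> j _; rewrite lee_fin mulr_ge0 // Dl_ge0.
rewrite -!nneseriesD; last 4 first.
- by move=> j _ _; rewrite lee_fin.
- by move=> j _ _; rewrite lee_fin mulr_ge0 // ?sqr_ge0 // ltW.
- by move=> j _ _; rewrite lee_fin mulr_ge0 // ?sqr_ge0 // ltW.
- by move=> j _ _; rewrite mule_ge0 // lee_fin mulr_ge0 // Dl_ge0.
apply: eq_eseriesr => j _; rewrite -!EFinM -!EFinD; congr (_%:E).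
by rewrite /Fl /Il; case: ifP => _; ring.
Qed.


Lemma negcase : delta < 0 ->
  (\sum_(j <oo) (p j * Fl j)%:E)%E =
  (\sum_(m.+1 <= i <oo) (s_ p delta i * (yz p (i%:Z + delta) + yz p (i%:Z + delta - 1)
                                        - yz p (i%:Z - 1)))%:E)%E.
Proof.
move=> hneg; have K := key; rewrite S1 S2neg // S3 in K.
set a := yz p (m%:Z + delta) in K *.
set g := (\sum_(m.+1 <= i <oo) _)%E.
have G : (g + a%:E = \sum_(i <oo) (if (m < i)%N then s_ p delta i *
      (pz p (i%:Z + delta) + 2 * yz p (i%:Z + delta)) else 0)%:E)%E.
  rewrite /g /a reindex' (tailser m.+1) -nneseriesD; last 2 first.
  - move=> i _ _; case: ifP => mi //; rewrite lee_fin; apply: mulr_ge0; first exact: s_ge0.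
    have := yz_ge0' (i%:Z + delta); have : yz p (i%:Z - 1) <= yz p (i%:Z + delta - 1).
      by apply: yz_mono'; lia.
    lra.
  - by move=> i _ _; case: ifP => _ //; rewrite lee_fin; exact: pz_ge0.
  apply: eq_eseriesr => i _; case: ifP => mi; last by rewrite adde0.
  rewrite -EFinD Y2' -(sY' i); congr (_%:E); ring.
rewrite -G in K.
have K' : (\sum_(j <oo) (p j * Fl j)%:E + (2 * a)%:E = g + (2 * a)%:E)%E.
  by rewrite EFinM K addeCA -EFinD; congr (_ + _%:E)%E; ring.
have := congr1 (fun x => x - (2 * a)%:E)%E K'.
by rewrite !addeK.
Qed.

Lemma poscase : 0 < delta ->
  (\sum_(j <oo) (p j * Fl j)%:E)%E =
  ((yz p (m%:Z + delta) * (1 - 2 * \sum_(1 <= i < `|delta|%N.+1) s_ p delta (m + i)))%:E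
    + 2%:E * (\sum_(m.+1 <= i <oo)
        ((s_ p delta i) * (yz p (i%:Z + delta) + pz p (i%:Z + delta) / 2))%:E)
    - (2 * yz p (m%:Z + 2 * delta))%:E)%E.
Proof.
move=> hp; have K := key; rewrite S1 S2pos // S3 in K.
set B := (\sum_(m.+1 <= i <oo) _)%E.
have G : (\sum_(i <oo) (if (m < i)%N then s_ p delta i *
      (pz p (i%:Z + delta) + 2 * yz p (i%:Z + delta)) else 0)%:E = 2%:E * B)%E.
  rewrite /B (tailser m.+1) -nneseriesZl; last first.
    move=> i _; case: ifP => _ //; rewrite lee_fin; apply: mulr_ge0; first exact: s_ge0.
    by apply: addr_ge0; [exact: yz_ge0' | apply: divr_ge0 => //; exact: pz_ge0].
  apply: eq_eseriesr => i _; case: ifP => _; last by rewrite mule0.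
  by rewrite -EFinM; congr (_%:E); field.
rewrite G -EFinM in K.
set c := 2 * _ in K.
have := congr1 (fun x => x - c%:E)%E K; rewrite addeK // => ->.
rewrite addeAC [in RHS]addeAC -!EFinB; congr (_ + _)%E; congr (_%:E).
rewrite /c; ring.
Qed.

End per_m.
Section prob.
Context {R : realType} {d : measure_display} {T : measurableType d}
  (P : probability T R) (X : nat -> T -> nat) (p : nat -> R)
  (hXmeas : forall n k, measurable (X n @^-1` [set k]))
  (hindep : mutually_independent P X)
  (hdist : forall n k, (1 <= n)%N -> P (X n @^-1` [set k]) = (p k)%:E)
  (hpos : forall k, 0 < p k).

Lemma preim_meas i (B : set nat) : measurable (X i @^-1` B).
Proof.
rewrite (_ : X i @^-1` B = \bigcup_(c in B) X i @^-1` [set c]).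
  exact: bigcup_measurable.
by apply/seteqP; split => [w Bw | w [c Bc /= ->]] //=; exists (X i w).
Qed.

Lemma hsumP : (\sum_(j <oo) (p j)%:E)%E = 1%E.
Proof.
rewrite -(probability_setT P).
have -> : [set: T] = \bigcup_(j in [set: nat]) X 1 @^-1` [set j].
  by apply/seteqP; split => // w _; exists (X 1 w).
rewrite measure_bigcup //=; last first.
  by move=> i j _ _ [w [/= hi hj]]; rewrite -hi -hj.
apply: congr_lim; apply/funext => m /=.
by apply: eq_big => [i|i _]; [rewrite in_setT | rewrite hdist].
Qed.

Lemma PE A : measurable A -> P A = (fine (P A))%:E.
Proof. by move=> mA; rewrite fineK // fin_num_measure. Qed.

Lemma bigI_mem (r : seq nat) (F : nat -> set T) w :
  (\big[setI/setT]_(i <- r) F i) w <-> (forall i, i \in r -> F i w).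
Proof.
elim: r => [|a r IH]; first by rewrite big_nil.
rewrite big_cons; split.
- move=> [Fa /IH h] i; rewrite in_cons => /orP[/eqP ->|] //; exact: h.
- move=> h; split; first by apply: h; rewrite in_cons eqxx.
  by apply/IH => i ir; apply: h; rewrite in_cons ir orbT.
Qed.

Lemma bigI_nat a b (F : nat -> set T) w :
  (\big[setI/setT]_(a <= i < b) F i) w <-> (forall i, (a <= i < b)%N -> F i w).
Proof.
rewrite bigI_mem; split => h i hi; apply: h; by rewrite mem_index_iota in hi *.
Qed.

Lemma Mx_rec j w : Mx X j.+1 w = maxn (Mx X j w) (X j.+1 w).
Proof. by rewrite /Mx big_nat_recr. Qed.

Lemma Mx0 w : Mx X 0 w = 0%N.
Proof. by rewrite /Mx big_geq. Qed.

Variable n : nat.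

Definition G0 : set (set T) :=
  [set A | exists i (B : set nat), (1 <= i <= n)%N /\ A = X i @^-1` B].

Local Notation GS := (g_sigma_algebraType G0).

Lemma filtrE A : filtr X n A = (measurable (A : set GS)).
Proof. by []. Qed.

Lemma filtr_meas A : filtr X n A -> measurable A.
Proof.
apply: (smallest_sub (sigma_algebra_measurable T)).
by move=> _ [i [B [_ ->]]]; exact: preim_meas.
Qed.

Lemma Mle_GS j c : (j <= n)%N -> measurable ([set w | (Mx X j w <= c)%N] : set GS).
Proof.
elim: j => [|j IH] hj.
  rewrite (_ : [set w | _] = setT); first exact: measurableT.
  by apply/seteqP; split => // w _ /=; rewrite Mx0.
rewrite (_ : [set w | _] = [set w | (Mx X j w <= c)%N] `&` X j.+1 @^-1` [set x | (x <= c)%N]).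
  apply: measurableI; first by apply: IH; lia.
  by apply: sub_sigma_algebra; exists j.+1, [set x | (x <= c)%N]; split => //; lia.
by apply/seteqP; split => w /=; rewrite Mx_rec geq_max => /andP.
Qed.

Lemma Meq_GS c : measurable ([set w | Mx X n w = c] : set GS).
Proof.
case: c => [|c].
  rewrite (_ : [set w | _] = [set w | (Mx X n w <= 0)%N]); first exact: Mle_GS.
  by apply/seteqP; split => w /=; rewrite leqn0 => /eqP.
rewrite (_ : [set w | _] = [set w | (Mx X n w <= c.+1)%N] `\` [set w | (Mx X n w <= c)%N]).
  by apply: measurableD; exact: Mle_GS.
by apply/seteqP; split => w /=; [move=> ->; split => //; lia | move=> [h1 h2]; lia].
Qed.

Lemma Mpre_GS (C : set nat) : measurable ([set w | C (Mx X n w)] : set GS).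
Proof.
rewrite (_ : [set w | _] = \bigcup_(c in C) [set w | Mx X n w = c]).
  by apply: bigcup_measurable => c _; exact: Meq_GS.
by apply/seteqP; split => [w Cw | w [c Cc /= ->]] //; exists (Mx X n w).
Qed.

Lemma Mpre_meas (C : set nat) : measurable [set w | C (Mx X n w)].
Proof. by apply: filtr_meas; rewrite filtrE; exact: Mpre_GS. Qed.

Definition G1 : set (set T) :=
  [set A | exists Bs : nat -> set nat, A = \big[setI/setT]_(1 <= i < n.+1) X i @^-1` Bs i].

Definition Hind : set (set T) := [set A | measurable A /\
  forall j, P (A `&` X n.+1 @^-1` [set j]) = (P A * (p j)%:E)%E].

Lemma rect_meas (Bs : nat -> set nat) a b :
  measurable (\big[setI/setT]_(a <= i < b) X i @^-1` Bs i).
Proof.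
apply: big_ind; [exact: measurableT | move=> ? ? ? ?; exact: measurableI |].
by move=> i _; exact: preim_meas.
Qed.

Lemma G1I : setI_closed G1.
Proof.
move=> _ _ [B1 ->] [B2 ->]; exists (fun i => B1 i `&` B2 i).
apply/seteqP; split => w.
- move=> [/bigI_nat h1 /bigI_nat h2]; apply/bigI_nat => i hi; split.
  + exact: h1.
  + exact: h2.
- move=> /bigI_nat h; split; apply/bigI_nat => i hi; by case: (h i hi).
Qed.

Lemma G0G1 : G0 `<=` G1.
Proof.
move=> _ [i [B [hi ->]]]; exists (fun l => if l == i then B else setT).
apply/seteqP; split => w.
- move=> Bw; apply/bigI_nat => l hl; by case: eqP => [->|].
- move=> /bigI_nat h; have := h i; rewrite eqxx; apply; lia.
Qed.

Lemma G1H : G1 `<=` Hind.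
Proof.
move=> _ [Bs ->]; split; first exact: rect_meas.
move=> j; pose Bs' := fun i => if i == n.+1 then [set j] else Bs i.
have E1 : \big[setI/setT]_(1 <= i < n.+1) X i @^-1` Bs i `&` X n.+1 @^-1` [set j] =
    \big[setI/setT]_(1 <= i < n.+2) X i @^-1` Bs' i.
  rewrite [RHS]big_nat_recr //= /Bs' ?eqxx; congr (_ `&` _).
  by apply: eq_big_nat => i /andP[_ hi]; rewrite (ltn_eqF hi).
have hind := hindep; rewrite /mutually_independent in hind.
rewrite E1 hind big_nat_recr //= /Bs' eqxx hdist // hind; congr (_ * _)%E.
by apply: eq_big_nat => i /andP[_ hi]; rewrite (ltn_eqF hi).
Qed.

Lemma Hdynkin : dynkin Hind.
Proof.
split.
- split; first exact: measurableT.
  by move=> j; rewrite setTI probability_setT mul1e hdist.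
- move=> A [mA hA]; split; first exact: measurableC.
  move=> j; set E := X n.+1 @^-1` [set j].
  have mE : measurable E := preim_meas _ _.
  have hU : P E = (P (A `&` E) + P (~` A `&` E))%E.
    rewrite -measureU; [| exact: measurableI | apply: measurableI => //; exact: measurableC |].
      by rewrite -setIUl setUCr setTI.
    by rewrite setIACA setICr set0I.
  have h1 := hA j; rewrite -/E in h1.
  rewrite probability_setC // (PE _ mA) (PE _ (measurableI _ _ mA mE)) in h1 hU *.
  rewrite (PE _ (measurableI _ _ (measurableC mA) mE)) in hU *.
  rewrite /E hdist // -/E in hU *.
  rewrite -EFinM in h1; rewrite -EFinD in hU.
  have e1 := EFin_inj h1; have e2 := EFin_inj hU.
  have -> : (1 - (fine (P A))%:E = (1 - fine (P A))%:E)%E by [].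
  rewrite -EFinM.
  by congr (_%:E); rewrite mulrBl mul1r; lra.
- move=> F tF hF; split.
    by apply: bigcup_measurable => i _; exact: (hF i).1.
  move=> j; rewrite setI_bigcupl !measure_bigcup //=; last 3 first.
  + by move=> i _; exact: (hF i).1.
  + by move=> i _; apply: measurableI; [exact: (hF i).1 | exact: preim_meas].
  + by move=> a b _ _ [w [[fa _] [fb _]]]; apply: tF => //; exists w.
  rewrite muleC -nneseriesZl; last by move=> i _; exact: measure_ge0.
  by apply: eq_eseriesr => i _; rewrite (hF i).2 muleC.
Qed.

Lemma indep B : filtr X n B -> Hind B.
Proof.
move=> hB; apply: (lambda_system_subset G1I ((dynkin_lambda_system Hind).1 Hdynkin) G1H).
  by move=> ? ? ? _.
move: hB; apply: smallest_sub; first exact: smallest_sigma_algebra.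
by move=> A /G0G1 hA; exact: sub_sigma_algebra.
Qed.

Lemma meas2 (g : nat -> nat -> \bar R) :
  measurable_fun setT (fun w => g (Mx X n w) (X n.+1 w)).
Proof.
move=> _ B mB; rewrite setTI.
rewrite (_ : _ @^-1` B = \bigcup_(a in setT)
    ([set w | Mx X n w = a] `&` X n.+1 @^-1` [set b | B (g a b)])).
  apply: bigcup_measurable => a _; apply: measurableI; last exact: preim_meas.
  exact: (Mpre_meas [set a]).
by apply/seteqP; split => [w Bw | w [a _ [/= -> h]]] //; exists (Mx X n w).
Qed.

Lemma xiE delta w : (xi X p delta n.+1 w) ^+ 2 = Fl p delta (Mx X n w) (X n.+1 w).
Proof. by rewrite /xi /Ind /= Mx_rec thetaD /Fl /Il. Qed.

Lemma int_eq delta (g : nat -> \bar R)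
  (hg : forall m, (\sum_(j <oo) (p j * Fl p delta m j)%:E)%E = g m)
  A (hA : filtr X n A) :
  (\int[P]_(w in A) (Fl p delta (Mx X n w) (X n.+1 w))%:E =
   \int[P]_(w in A) g (Mx X n w))%E.
Proof.
have hsum := hsumP.
have pF m j : 0 <= p j * Fl p delta m j by apply: mulr_ge0; [exact/ltW | exact: sqr_ge0].
have g0 m : (0 <= g m)%E by rewrite -hg; apply: nneseries_ge0 => j _ _; rewrite lee_fin.
pose Am m := A `&` [set w | Mx X n w = m].
have hAm m : filtr X n (Am m).
  by rewrite filtrE; apply: measurableI; [exact: hA | exact: Meq_GS].
have mAm m : measurable (Am m) := filtr_meas _ (hAm m).
have AE : A = \bigcup_m Am m.
  by apply/seteqP; split => [w Aw | w [m _ []]] //; exists (Mx X n w).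
have tAm : trivIset setT Am by move=> a b _ _ [w [[_ ha] [_ hb]]]; rewrite -ha -hb.
transitivity (\int[P]_(w in \bigcup_m Am m) (Fl p delta (Mx X n w) (X n.+1 w))%:E)%E;
  first by rewrite -AE.
transitivity (\int[P]_(w in \bigcup_m Am m) g (Mx X n w))%E; last by rewrite -AE.
rewrite !ge0_integral_bigcup //; last 3 first.
- exact: (measurable_funS measurableT (@subsetT _ _) (meas2 (fun a _ => g a))).
- exact: (measurable_funS measurableT (@subsetT _ _) (meas2 (fun a b => (Fl p delta a b)%:E))).
- by move=> w _; rewrite lee_fin sqr_ge0.
apply: eq_eseriesr => m _.
transitivity (\int[P]_(w in Am m) (Fl p delta m (X n.+1 w))%:E)%E.
  by apply: eq_integral => w; rewrite inE => -[_ /= ->].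
transitivity (\int[P]_(w in Am m) (cst (g m) w))%E; last first.
  by apply: eq_integral => w; rewrite inE => -[_ /= ->].
rewrite integral_cst // -hg.
have AmE : Am m = \bigcup_j (Am m `&` X n.+1 @^-1` [set j]).
  by apply/seteqP; split => [w Aw | w [j _ []]] //; exists (X n.+1 w).
transitivity (\int[P]_(w in \bigcup_j (Am m `&` X n.+1 @^-1` [set j]))
   (Fl p delta m (X n.+1 w))%:E)%E; first by rewrite -AmE.
have mF : forall j, measurable (Am m `&` X n.+1 @^-1` [set j]).
  by move=> j; apply: measurableI => //; exact: preim_meas.
rewrite (ge0_integral_bigcup P mF); last 3 first.
- exact: (measurable_funS measurableT (@subsetT _ _) (meas2 (fun a b => (Fl p delta m b)%:E))).
- by move=> w _; rewrite lee_fin sqr_ge0.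
- by move=> a b _ _ [w [[_ ha] [_ hb]]]; rewrite -ha -hb.
transitivity (\sum_(j <oo) ((Fl p delta m j)%:E * (P (Am m) * (p j)%:E)))%E.
  apply: eq_eseriesr => j _; rewrite -(indep _ (hAm m)).2 -integral_cst; last first.
    by apply: measurableI => //; exact: preim_meas.
  by apply: eq_integral => w; rewrite inE => -[_ /= ->].
transitivity ((\sum_(j <oo) (p j * Fl p delta m j)%:E) * (fine (P (Am m)))%:E)%E;
  last by congr (_ * _)%E; rewrite fineK //; apply: fin_num_measure.
rewrite [RHS]muleC (PE _ (mAm m)) -nneseriesZl; last by move=> j _; rewrite lee_fin.
apply: eq_eseriesr => j _; rewrite -!EFinM; congr (_%:E); ring.
Qed.

Lemma condexp_gen delta (g : nat -> \bar R)
  (hg : forall m, (\sum_(j <oo) (p j * Fl p delta m j)%:E)%E = g m) :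
  is_cond_exp P (filtr X n) (fun w => ((xi X p delta n.+1 w) ^+ 2)%:E)
    (fun w => g (Mx X n w)).
Proof.
split.
- by move=> B mB; rewrite filtrE; exact: (Mpre_GS (g @^-1` B)).
- move=> A hA; rewrite -(@int_eq delta g hg A hA).
  by apply: eq_integral => w _; rewrite xiE.
Qed.

End prob.

Theorem proposition2p2 (R : realType) (d : measure_display) (T : measurableType d)
  (P : probability T R) (X : nat -> T -> nat) (p : nat -> R) (delta : int)
  (hXmeas : forall n k, measurable (X n @^-1` [set k]))
  (hindep : mutually_independent P X)
  (hdist : forall n k, (1 <= n)%N -> P (X n @^-1` [set k]) = (p k)%:E)
  (hpos : forall k, 0 < p k)
  (k : nat) (hk : (1 <= k)%N) :
  ((delta < 0) ->
     is_cond_exp P (filtr X k.-1)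
       (fun w => ((xi X p delta k w) ^+ 2)%:E)
       (fun w => (\sum_((Mx X k.-1 w).+1 <= i <oo)
                    ((s_ p delta i) * (yz p (i%:Z + delta) + yz p (i%:Z + delta - 1)
                                        - yz p (i%:Z - 1)))%:E)%E)) /\
  ((0 < delta) ->
     is_cond_exp P (filtr X k.-1)
       (fun w => ((xi X p delta k w) ^+ 2)%:E)
       (fun w => ((yz p ((Mx X k.-1 w)%:Z + delta)
                    * (1 - 2 * \sum_(1 <= i < `|delta|%N.+1) s_ p delta (Mx X k.-1 w + i)))%:E
                  + 2%:E * (\sum_((Mx X k.-1 w).+1 <= i <oo)
                              ((s_ p delta i) * (yz p (i%:Z + delta) + pz p (i%:Z + delta) / 2))%:E)
                  - (2 * yz p ((Mx X k.-1 w)%:Z + 2 * delta))%:E)%E)).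
Proof.
case: k hk => [//|n] _.
have hsum := hsumP P X p hXmeas hdist.
split => hd.
- apply: (@condexp_gen R d T P X p hXmeas hindep hdist hpos n delta (fun m =>
    (\sum_(m.+1 <= i <oo)
        ((s_ p delta i) * (yz p (i%:Z + delta) + yz p (i%:Z + delta - 1)
                              - yz p (i%:Z - 1)))%:E)%E)).
  by move=> m; exact: negcase.
- apply: (@condexp_gen R d T P X p hXmeas hindep hdist hpos n delta (fun m =>
    ((yz p (m%:Z + delta)
        * (1 - 2 * \sum_(1 <= i < `|delta|%N.+1) s_ p delta (m + i)))%:E
      + 2%:E * (\sum_(m.+1 <= i <oo)
                  ((s_ p delta i) * (yz p (i%:Z + delta) + pz p (i%:Z + delta) / 2))%:E)
      - (2 * yz p (m%:Z + 2 * delta))%:E)%E)).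
  by move=> m; exact: poscase.
Qed.
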